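(* Let $\mathcal C$ be a semi-abelian category, $\partial\colon X\to B$ a morphism and $\xi\colon B\flat X\to X$ an internal action of $B$ on $X$. Then $(\partial,\xi)$ is an internal precrossed module if and only if $[\partial,1_B]_\xi=0$ (the Precrossed Module Condition).
   Context: In a semi-abelian category, for objects $B,X$ let $\kappa_{B,X}\colon B\flat X\to B+X$ be the kernel of $\langle 1_B,0\rangle\colon B+X\to B$. An internal action of $B$ on $X$ is a morphism $\xi\colon B\flat X\to X$ satisfying the standard (Bourn–Janelidze) axioms; it induces via the semi-direct product construction a split short exact sequence $0\to X\xrightarrow{k}X\rtimes_\xi B\xrightarrow{d}B\to0$ with section $e\colon B\to X\rtimes_\xi B$ (with $q\colon B+X\to X\rtimes_\xi B$ the coequaliser of $\kappa_{B,X}$ and $\iota_2\circ\xi$, $k=q\circ\iota_2$, $e=q\circ\iota_1$). The $\xi$-commutator of $f\colon X\to Y$, $g\colon B\to Y$ is $[f,g]_\xi$, the regular image of $\langle f,g\rangle\circ\kappa$ where $\kappa\colon X\diamond_\xi B\to X+B$ is the kernel of $\langle k,e\rangle\colon X+B\to X\rtimes_\xi B$. The pair $(\partial,\xi)$ is an internal precrossed module if there exists $c\colon X\rtimes_\xi B\to B$ with $c\circ e=1_B$ and $c\circ k=\partial$. *)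

(* Defs.v *)
Set Implicit Arguments.
Unset Strict Implicit.

Record Category := {
  Ob :> Type;
  Hom : Ob -> Ob -> Type;
  idm : forall A, Hom A A;
  comp : forall A B C, Hom B C -> Hom A B -> Hom A C;
  comp_assoc : forall A B C D (h : Hom C D) (g : Hom B C) (f : Hom A B),
      comp h (comp g f) = comp (comp h g) f;
  id_left : forall A B (f : Hom A B), comp (idm B) f = f;
  id_right : forall A B (f : Hom A B), comp f (idm A) = f }.

Arguments Hom {c} _ _.
Arguments idm {c} _.
Arguments comp {c A B C} _ _.
Notation "g \o f" := (comp g f) (at level 40, left associativity).

Section Basic.
Context {C : Category}.

Definition mono {A B : C} (m : Hom A B) : Prop :=
  forall Z (a b : Hom Z A), m \o a = m \o b -> a = b.

Definition iso {A B : C} (f : Hom A B) : Prop :=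
  exists g : Hom B A, g \o f = idm A /\ f \o g = idm B.

Definition is_pullback {A B S P : C} (f : Hom A S) (g : Hom B S)
  (p1 : Hom P A) (p2 : Hom P B) : Prop :=
  f \o p1 = g \o p2 /\
  forall Z (a : Hom Z A) (b : Hom Z B), f \o a = g \o b ->
    exists! u : Hom Z P, p1 \o u = a /\ p2 \o u = b.

Definition has_pullbacks : Prop :=
  forall A B S (f : Hom A S) (g : Hom B S),
    exists P (p1 : Hom P A) (p2 : Hom P B), is_pullback f g p1 p2.

Definition is_kernel_pair {A B P : C} (f : Hom A B) (p1 p2 : Hom P A) : Prop :=
  is_pullback f f p1 p2.

Definition is_coequalizer {R A Q : C} (f g : Hom R A) (q : Hom A Q) : Prop :=
  q \o f = q \o g /\
  forall Z (h : Hom A Z), h \o f = h \o g -> exists! u : Hom Q Z, u \o q = h.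

Definition regular_epi {A Q : C} (e : Hom A Q) : Prop :=
  exists R (f g : Hom R A), is_coequalizer f g e.

(* regular category (finite limits are required separately) *)
Definition kernel_pairs_have_coequalizers : Prop :=
  forall A B P (f : Hom A B) (p1 p2 : Hom P A), is_kernel_pair f p1 p2 ->
    exists Q (q : Hom A Q), is_coequalizer p1 p2 q.

Definition regular_epis_pullback_stable : Prop :=
  forall A B S P (f : Hom A S) (g : Hom B S) (p1 : Hom P A) (p2 : Hom P B),
    is_pullback f g p1 p2 -> regular_epi f -> regular_epi p2.

(* internal equivalence relations, via generalized elements *)
Definition is_equivalence_relation {R A : C} (r1 r2 : Hom R A) : Prop :=
  (forall Z (a b : Hom Z R), r1 \o a = r1 \o b -> r2 \o a = r2 \o b -> a = b) /\
  (exists d : Hom A R, r1 \o d = idm A /\ r2 \o d = idm A) /\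
  (exists s : Hom R R, r1 \o s = r2 /\ r2 \o s = r1) /\
  (forall Z (a b : Hom Z R), r2 \o a = r1 \o b ->
     exists c : Hom Z R, r1 \o c = r1 \o a /\ r2 \o c = r2 \o b).

Definition effective_equivalence_relations : Prop :=
  forall R A (r1 r2 : Hom R A), is_equivalence_relation r1 r2 ->
    exists Q (f : Hom A Q), is_kernel_pair f r1 r2.

End Basic.

Record PointedCat := {
  pcat :> Category;
  zob : pcat;
  zto : forall A : pcat, Hom A zob;
  zfrom : forall A : pcat, Hom zob A;
  zto_unique : forall A (f : Hom A zob), f = zto A;
  zfrom_unique : forall A (f : Hom zob A), f = zfrom A }.

Arguments zob {p}.

Section Pointed.
Context {C : PointedCat}.

Definition zero (A B : C) : Hom A B := zfrom B \o zto A.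

Definition is_zero_object (Z : C) : Prop :=
  forall A : C, (exists! f : Hom A Z, True) /\ (exists! g : Hom Z A, True).

Definition is_kernel {K A B : C} (f : Hom A B) (k : Hom K A) : Prop :=
  f \o k = zero K B /\
  forall Z (h : Hom Z A), f \o h = zero Z B -> exists! u : Hom Z K, k \o u = h.

(* pointed Bourn-protomodularity: the split short five lemma *)
Definition split_short_five_lemma : Prop :=
  forall (K A B K' A' B' : C)
    (k : Hom K A) (p : Hom A B) (s : Hom B A)
    (k' : Hom K' A') (p' : Hom A' B') (s' : Hom B' A')
    (u : Hom K K') (v : Hom A A') (w : Hom B B'),
    is_kernel p k -> p \o s = idm B ->
    is_kernel p' k' -> p' \o s' = idm B' ->
    v \o k = k' \o u -> p' \o v = w \o p -> v \o s = s' \o w ->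
    iso u -> iso w -> iso v.

End Pointed.

Record SemiAbelian := {
  sa_pointed :> PointedCat;
  coprod : sa_pointed -> sa_pointed -> sa_pointed;
  inl : forall A B : sa_pointed, Hom A (coprod A B);
  inr : forall A B : sa_pointed, Hom B (coprod A B);
  copair : forall (A B Z : sa_pointed), Hom A Z -> Hom B Z -> Hom (coprod A B) Z;
  copair_inl : forall A B Z (f : Hom A Z) (g : Hom B Z), copair f g \o inl A B = f;
  copair_inr : forall A B Z (f : Hom A Z) (g : Hom B Z), copair f g \o inr A B = g;
  copair_unique : forall A B Z (f : Hom A Z) (g : Hom B Z) (h : Hom (coprod A B) Z),
      h \o inl A B = f -> h \o inr A B = g -> h = copair f g;
  (* chosen kernels (these exist in any pointed finitely complete category) *)
  kerO : forall A B : sa_pointed, Hom A B -> sa_pointed;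
  kerm : forall (A B : sa_pointed) (f : Hom A B), Hom (kerO f) A;
  kerm_kernel : forall (A B : sa_pointed) (f : Hom A B), is_kernel f (kerm f);
  (* finitely complete (the zero object is terminal) *)
  sa_pullbacks : has_pullbacks (C := sa_pointed);
  sa_coeq : kernel_pairs_have_coequalizers (C := sa_pointed);
  sa_stable : regular_epis_pullback_stable (C := sa_pointed);
  sa_exact : effective_equivalence_relations (C := sa_pointed);
  sa_protomodular : split_short_five_lemma (C := sa_pointed) }.

Arguments coprod {s} _ _.
Arguments inl {s} _ _.
Arguments inr {s} _ _.
Arguments copair {s A B Z} _ _.
Arguments kerO {s A B} _.
Arguments kerm {s A B} _.

Section Actions.
Context {C : SemiAbelian}.

Definition coprod_map {A B A' B' : C} (f : Hom A A') (g : Hom B B') :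
  Hom (coprod A B) (coprod A' B') := copair (inl A' B' \o f) (inr A' B' \o g).

Definition flat (B X : C) : C := kerO (copair (idm B) (zero X B)).
Definition kappa (B X : C) : Hom (flat B X) (coprod B X) :=
  kerm (copair (idm B) (zero X B)).

(* Bourn–Janelidze internal action: an algebra for the monad B flat (-):
   xi o eta_X = 1_X  and  xi o mu_X = xi o (B flat xi),
   where eta_X, mu_X and B flat xi are the unique morphisms induced on
   kernels by iota_2, <iota_1, kappa_{B,X}> and 1_B + xi respectively. *)
Definition is_internal_action {B X : C} (xi : Hom (flat B X) X) : Prop :=
  (forall eta : Hom X (flat B X),
      kappa B X \o eta = inr B X -> xi \o eta = idm X) /\
  (forall (mu bxi : Hom (flat B (flat B X)) (flat B X)),
      kappa B X \o mu = copair (inl B X) (kappa B X) \o kappa B (flat B X) ->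
      kappa B X \o bxi = coprod_map (idm B) xi \o kappa B (flat B X) ->
      xi \o mu = xi \o bxi).

(* (d, xi) is an internal precrossed module, given the semi-direct product
   data k : X -> X x| B and e : B -> X x| B *)
Definition is_precrossed {X B P : C} (d : Hom X B) (k : Hom X P) (e : Hom B P)
  : Prop :=
  exists c : Hom P B, c \o e = idm B /\ c \o k = d.

Definition regular_image_is_zero {D Y : C} (h : Hom D Y) : Prop :=
  forall (I : C) (r : Hom D I) (m : Hom I Y),
    regular_epi r -> mono m -> m \o r = h -> is_zero_object I.

End Actions.

(* Main.v *)
Require Import Defs.

Section L.
Context {C : SemiAbelian}.

Lemma zero_compr (A B Z : C) (f : Hom Z A) : zero A B \o f = zero Z B.
Proof. unfold zero. rewrite <- comp_assoc, (@zto_unique _ _ (zto A \o f)). reflexivity. Qed.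

Lemma zero_compl (A B Z : C) (g : Hom B Z) : g \o zero A B = zero A Z.
Proof. unfold zero. rewrite comp_assoc, (@zfrom_unique _ _ (g \o zfrom B)). reflexivity. Qed.

Lemma regepi_epi {A Q : C} (e : Hom A Q) : regular_epi e ->
  forall Z (x y : Hom Q Z), x \o e = y \o e -> x = y.
Proof.
  intros [R [f [g [He Hu]]]] Z x y Hxy.
  destruct (Hu Z (x \o e)) as [u [_ Hun]].
  { rewrite <- !comp_assoc, He; reflexivity. }
  rewrite <- (Hun x eq_refl), (Hun y (eq_sym Hxy)). reflexivity.
Qed.

Lemma products (A Z : C) : exists (Pr : C) (p1 : Hom Pr A) (p2 : Hom Pr Z),
  forall W (x : Hom W A) (y : Hom W Z), exists! u, p1 \o u = x /\ p2 \o u = y.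
Proof.
  destruct (@sa_pullbacks C A Z zob (zto A) (zto Z)) as [Pr [p1 [p2 [_ H]]]].
  exists Pr, p1, p2. intros W x y. apply H.
  rewrite (@zto_unique _ _ (zto A \o x)), (@zto_unique _ _ (zto Z \o y)). reflexivity.
Qed.

Lemma equalizers {A Z : C} (a b : Hom A Z) : exists E (e : Hom E A),
  a \o e = b \o e /\ mono e /\
  forall W (z : Hom W A), a \o z = b \o z -> exists u, e \o u = z.
Proof.
  destruct (products A Z) as [Pr [p1 [p2 Hp]]].
  destruct (Hp A (idm A) a) as [la [[la1 la2] _]].
  destruct (Hp A (idm A) b) as [lb [[lb1 lb2] _]].
  destruct (@sa_pullbacks C _ _ _ la lb) as [E [e1 [e2 [Hc Hu]]]].
  assert (He12 : e1 = e2).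
  { pose proof (f_equal (fun t => p1 \o t) Hc) as H. simpl in H.
    rewrite !comp_assoc, la1, lb1, !id_left in H. exact H. }
  assert (Hab : a \o e1 = b \o e2).
  { rewrite <- la2, <- lb2, <- !comp_assoc, Hc. reflexivity. }
  exists E, e1. split; [|split].
  - rewrite Hab, He12. reflexivity.
  - intros W x y Hxy.
    destruct (Hu W (e1 \o x) (e2 \o x)) as [u [_ Hun]].
    { rewrite !comp_assoc, Hc; reflexivity. }
    rewrite <- (Hun x (conj eq_refl eq_refl)).
    apply Hun. split. symmetry; exact Hxy. rewrite <- He12. symmetry; exact Hxy.
  - intros W z Hz.
    destruct (Hp W z (a \o z)) as [v [_ Hv]].
    assert (Hlab : la \o z = lb \o z).
    { rewrite <- (Hv (la \o z)), (Hv (lb \o z)). reflexivity.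
      - rewrite !comp_assoc, lb1, lb2, id_left. split; [reflexivity|symmetry; exact Hz].
      - rewrite !comp_assoc, la1, la2, id_left. split; reflexivity. }
    destruct (Hu W z z Hlab) as [u [[u1 _] _]].
    exists u; exact u1.
Qed.

Lemma joint_epic {K A B Z : C} (k : Hom K A) (p : Hom A B) (s : Hom B A)
  (a b : Hom A Z) : is_kernel p k -> p \o s = idm B ->
  a \o k = b \o k -> a \o s = b \o s -> a = b.
Proof.
  intros [Hk0 Hku] Hps Hak Has.
  destruct (equalizers a b) as [E [e [Hae [Hm Hfac]]]].
  destruct (Hfac _ k Hak) as [k0 Hk0e].
  destruct (Hfac _ s Has) as [s0 Hs0e].
  assert (Hiso : iso e).
  { apply (@sa_protomodular C K E B K A B k0 (p \o e) s0 k p s (idm K) e (idm B)).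
    - split.
      + rewrite <- comp_assoc, Hk0e; exact Hk0.
      + intros W h Hh. destruct (Hku W (e \o h)) as [u [Hu Huu]].
        { rewrite comp_assoc; exact Hh. }
        exists u. split.
        * apply Hm. rewrite comp_assoc, Hk0e; exact Hu.
        * intros u' Hu'. apply Huu. rewrite <- Hk0e, <- comp_assoc, Hu'; reflexivity.
    - rewrite <- comp_assoc, Hs0e; exact Hps.
    - split; assumption.
    - exact Hps.
    - rewrite Hk0e, id_right; reflexivity.
    - rewrite id_left; reflexivity.
    - rewrite Hs0e, id_right; reflexivity.
    - exists (idm K); split; apply id_left.
    - exists (idm B); split; apply id_left. }
  destruct Hiso as [g [_ Heg]].
  rewrite <- (@id_right _ _ _ a), <- (@id_right _ _ _ b), <- Heg, !comp_assoc, Hae.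
  reflexivity.
Qed.

Lemma image_fact {D Y : C} (h : Hom D Y) : exists I0 (r : Hom D I0) (m : Hom I0 Y),
  regular_epi r /\ mono m /\ m \o r = h.
Proof.
  destruct (@sa_pullbacks C _ _ _ h h) as [R [h1 [h2 [Hh Hhu]]]].
  destruct (@sa_coeq C _ _ _ h h1 h2 (conj Hh Hhu)) as [I0 [r Hr]].
  pose proof Hr as Hr'. destruct Hr' as [Hr1 Hr2].
  destruct (Hr2 Y h Hh) as [m [Hmr _]].
  assert (Hre : regular_epi r) by (exists R, h1, h2; exact Hr).
  exists I0, r, m. split; [exact Hre|split; [|exact Hmr]].
  intros W a b Hab.
  destruct (@sa_pullbacks C _ _ _ r a) as [P1 [x1 [w1 [Hc1 Hu1]]]].
  pose proof (@sa_stable C _ _ _ _ r a x1 w1 (conj Hc1 Hu1) Hre) as Hw1.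
  destruct (@sa_pullbacks C _ _ _ r (b \o w1)) as [P2 [x2 [w2 [Hc2 Hu2]]]].
  pose proof (@sa_stable C _ _ _ _ r (b \o w1) x2 w2 (conj Hc2 Hu2) Hre) as Hw2.
  assert (E1 : r \o (x1 \o w2) = a \o (w1 \o w2)) by (rewrite !comp_assoc, Hc1; reflexivity).
  assert (E2 : r \o x2 = a \o (w1 \o w2)).
  { destruct (Hhu P2 (x1 \o w2) x2) as [t [[Ht1 Ht2] _]].
    - rewrite <- Hmr, <- !comp_assoc, E1, comp_assoc, Hab, Hc2, <- !comp_assoc. reflexivity.
    - rewrite <- E1, <- Ht1, <- Ht2, !comp_assoc, Hr1. reflexivity. }
  apply (regepi_epi w1 Hw1). apply (regepi_epi w2 Hw2).
  rewrite <- !comp_assoc, <- E2, Hc2, <- comp_assoc. reflexivity.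
Qed.

Lemma zero_obj_map {I0 A B : C} (Hz : is_zero_object I0) (r : Hom A I0) (m : Hom I0 B) :
  m \o r = zero A B.
Proof.
  destruct (Hz A) as [[f0 [_ Hf]] _].
  assert (Hr : r = zero A I0).
  { rewrite <- (Hf r I). exact (Hf _ I). }
  rewrite Hr, zero_compl. reflexivity.
Qed.

Lemma zero_image {D Y : C} (h : Hom D Y) : h = zero D Y -> regular_image_is_zero h.
Proof.
  intros Hh I0 r m Hr Hm Hmr.
  assert (Hr0 : r = zero D I0).
  { apply Hm. rewrite Hmr, Hh, zero_compl. reflexivity. }
  assert (Hid : zfrom I0 \o zto I0 = idm I0).
  { apply (regepi_epi r Hr). rewrite <- comp_assoc, (@zto_unique _ _ (zto I0 \o r)), id_left, Hr0.
    reflexivity. }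
  intro A. split.
  - exists (zfrom I0 \o zto A). split; [trivial|]. intros f _.
    rewrite <- (@id_left _ _ _ f), <- Hid, <- comp_assoc, (@zto_unique _ _ (zto I0 \o f)).
    reflexivity.
  - exists (zfrom A \o zto I0). split; [trivial|]. intros g _.
    rewrite <- (@id_right _ _ _ g), <- Hid, comp_assoc, (@zfrom_unique _ _ (g \o zfrom I0)).
    reflexivity.
Qed.

Lemma image_zero_zero {D Y : C} (h : Hom D Y) : regular_image_is_zero h -> h = zero D Y.
Proof.
  intro H. destruct (image_fact h) as [I0 [r [m [Hr [Hm Hmr]]]]].
  rewrite <- Hmr. apply zero_obj_map. exact (H I0 r m Hr Hm Hmr).
Qed.

End L.

Theorem mainTheorem9 (C : SemiAbelian) (X B : C) (d : Hom X B)
  (xi : Hom (flat B X) X) (Hxi : is_internal_action xi)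
  (P : C) (q : Hom (coprod B X) P)
  (Hq : is_coequalizer (kappa B X) (inr B X \o xi) q)
  (D : C) (kap : Hom D (coprod X B))
  (Hkap : is_kernel (copair (q \o inr B X) (q \o inl B X)) kap) :
  is_precrossed d (q \o inr B X) (q \o inl B X) <->
  regular_image_is_zero (copair d (idm B) \o kap).
Proof.
  set (f := copair (q \o inr B X) (q \o inl B X)) in *.
  set (g := copair d (idm B)).
  split.
  - intros [c [Hce Hck]]. apply zero_image.
    assert (Hg : g = c \o f).
    { symmetry; apply copair_unique; unfold f;
        rewrite <- comp_assoc; [rewrite copair_inl|rewrite copair_inr]; assumption. }
    rewrite Hg, <- comp_assoc, (proj1 Hkap), zero_compl. reflexivity.
  - intro Him. pose proof (image_zero_zero _ Him) as Hh0.
    destruct (@sa_pullbacks C _ _ _ f f) as [R [r1 [r2 [Hr Hru]]]].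
    destruct (Hru _ (idm _) (idm _) eq_refl) as [dl [[Hd1 Hd2] _]].
    assert (Hgr : g \o r1 = g \o r2).
    { apply (joint_epic (kerm r1) r1 dl).
      - apply kerm_kernel.
      - exact Hd1.
      - rewrite <- comp_assoc, (proj1 (@kerm_kernel C _ _ r1)), zero_compl.
        destruct (proj2 Hkap _ (r2 \o kerm r1)) as [t [Ht _]].
        { rewrite comp_assoc, <- Hr, <- comp_assoc, (proj1 (@kerm_kernel C _ _ r1)), zero_compl.
          reflexivity. }
        rewrite <- !comp_assoc, <- Ht, comp_assoc, Hh0, zero_compr. reflexivity.
      - rewrite <- !comp_assoc, Hd1, Hd2. reflexivity. }
    assert (Hsw : f \o copair (inr X B) (inl X B) = q).
    { transitivity (copair (q \o inl B X) (q \o inr B X)).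
      - apply copair_unique; rewrite <- comp_assoc;
          [rewrite copair_inl; unfold f; apply copair_inr
          |rewrite copair_inr; unfold f; apply copair_inl].
      - symmetry; apply copair_unique; reflexivity. }
    assert (Hgsw : g \o copair (inr X B) (inl X B) = copair (idm B) d).
    { apply copair_unique; rewrite <- comp_assoc;
        [rewrite copair_inl; unfold g; apply copair_inr
        |rewrite copair_inr; unfold g; apply copair_inl]. }
    destruct Hq as [Hq1 Hq2].
    destruct (Hru _ (copair (inr X B) (inl X B) \o kappa B X) (inl X B \o xi))
      as [w [[Hw1 Hw2] _]].
    { rewrite comp_assoc, Hsw, Hq1, !comp_assoc. unfold f. rewrite copair_inl. reflexivity. }
    destruct (Hq2 B (copair (idm B) d)) as [c [Hc _]].
    { rewrite (comp_assoc (copair (idm B) d) (inr B X) xi), copair_inr.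
      rewrite <- Hgsw, <- comp_assoc, <- Hw1, comp_assoc, Hgr, <- comp_assoc, Hw2.
      rewrite comp_assoc. unfold g. rewrite copair_inl. reflexivity. }
    exists c. split.
    + rewrite comp_assoc, Hc, copair_inl. reflexivity.
    + rewrite comp_assoc, Hc, copair_inr. reflexivity.
Qed.
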